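(* Let $d\ge 2$, $R_0>0$, and let $U:(0,\infty)\to\mathbb{R}$ be a measurable radial kernel profile such that $\int_{R_0}^{\infty}|U(r)|\,r^{d-2}\,e^{-r^2/\delta^2}\,dr<\infty$ for some $\delta>0$. For $\varepsilon>0$ let $U^{\varepsilon}(r)=U(r)\,\operatorname{Erf}(r/\varepsilon)$. Then for every $\varepsilon_{\rm tol}>0$ there exists $\varepsilon_0>0$ such that $$\int_{R_0}^{\infty}|(U-U^{\varepsilon})(r)|\,r^{d-1}\,dr\le\varepsilon_{\rm tol}\qquad\text{for all }0<\varepsilon<\varepsilon_0 .$$
   Context: $\operatorname{Erf}(x)=\frac{2}{\sqrt\pi}\int_0^x e^{-t^2}\,dt$ is the error function. *)

(* Defs.v *)
From HB Require Import structures.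
From mathcomp Require Import all_boot all_order all_algebra.
From mathcomp Require Import all_classical all_reals all_analysis.
Set Implicit Arguments. Unset Strict Implicit. Unset Printing Implicit Defensive.
Import Order.TTheory GRing.Theory Num.Theory.
Import numFieldNormedType.Exports.
Local Open Scope classical_set_scope.
Local Open Scope ring_scope.

(* Erf x = 2/sqrt(pi) * \int_0^x exp(-t^2) dt   (used here only for x > 0;
   for x >= 0 this is exactly the usual error function). *)
Definition Erf (R : realType) (x : R) : R :=
  2 / Num.sqrt pi * Rintegral (@lebesgue_measure R) `[0, x] (fun t => expR (- t ^+ 2)).

Definition Ueps (R : realType) (eps : R) (U : R -> R) : R -> R :=
  fun r => U r * Erf (r / eps).

(* Main.v *)
Require Import Defs.
From HB Require Import structures.
From mathcomp Require Import all_boot all_order all_algebra.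
From mathcomp Require Import all_classical all_reals all_analysis.
From mathcomp Require Import measurable_realfun ring lra.
Import Order.TTheory GRing.Theory Num.Theory.
Import numFieldNormedType.Exports.
Local Open Scope classical_set_scope.
Local Open Scope ring_scope.

Section S.
Context {R : realType}.
Let mu := @lebesgue_measure R.

Lemma pt_bound (x t : R) : 0 <= x -> x < t ->
  gauss_fun t <= 2 * expR (- x ^+ 2 / 2) * (oneDsqr t)^-1.
Proof.
move=> x0 xt.
have t0 : 0 < t by exact: le_lt_trans x0 xt.
have y1 := expR_ge1Dx (t ^+ 2 / 2).
have ey : (1 + t ^+ 2) * expR (- (t ^+ 2 / 2)) <= 2.
  rewrite expRN ler_pdivrMr ?expR_gt0 //.
  have : 0 <= t ^+ 2 by exact: sqr_ge0.
  lra.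
have xt2 : x ^+ 2 <= t ^+ 2.
  by rewrite ler_sqr ?nnegrE // ?(ltW t0) // ltW.
have e2 : expR (- (t ^+ 2 / 2)) <= expR (- x ^+ 2 / 2).
  rewrite ler_expR mulNr lerN2 ler_pM2r //.
have gE : gauss_fun t = expR (- (t ^+ 2 / 2)) * expR (- (t ^+ 2 / 2)).
  by rewrite /gauss_fun -expRD; congr expR; lra.
have op : 0 < oneDsqr t by rewrite /oneDsqr; have := sqr_ge0 t; lra.
rewrite ler_pdivlMr // gE.
have e0 := expR_ge0 (- (t ^+ 2 / 2)).
rewrite /oneDsqr.
have h1 : expR (- (t ^+ 2 / 2)) * expR (- (t ^+ 2 / 2)) * (1 + t ^+ 2)
   = ((1 + t ^+ 2) * expR (- (t ^+ 2 / 2))) * expR (- (t ^+ 2 / 2)) by ring.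
rewrite h1.
apply: le_trans (_ : 2 * expR (- (t ^+ 2 / 2)) <= _).
  by apply: ler_wpM2r.
by apply: ler_wpM2l.
Qed.

Lemma oneDsqrV_ge0 (t : R) : 0 <= (oneDsqr t)^-1.
Proof. by rewrite invr_ge0 /oneDsqr; have := sqr_ge0 t => h; lra. Qed.

Lemma mes_oneDsqrV (D : set R) : measurable_fun D (fun t : R => (oneDsqr t)^-1).
Proof.
apply: measurable_funTS; apply: continuous_measurable_fun.
exact: continuous_oneDsqrV.
Qed.

Lemma tail_le (x : R) : 0 <= x ->
 (\int[mu]_(t in `]x%R, +oo[) (gauss_fun t)%:E <= (pi * expR (- x ^+ 2 / 2))%:E)%E.
Proof.
move=> x0.
have c0 : 0 <= 2 * expR (- x ^+ 2 / 2) by rewrite mulr_ge0 // expR_ge0.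
apply: (@le_trans _ _ (\int[mu]_(t in `]x%R, +oo[)
          ((2 * expR (- x ^+ 2 / 2))%:E * ((oneDsqr t)^-1)%:E))%E).
  apply: ge0_le_integral => //.
  - by move=> t _; rewrite lee_fin gauss_fun_ge0.
  - apply/measurable_EFinP; apply: measurable_funTS; exact: measurable_gauss_fun.
  - apply: emeasurable_funM => //; apply/measurable_EFinP; exact: mes_oneDsqrV.
  - move=> t; rewrite /= in_itv /= andbT => xt.
    by rewrite -EFinM lee_fin; apply: pt_bound.
have o0 : forall t, `]x%R, +oo[%classic t -> (0 <= ((oneDsqr t)^-1)%:E)%E.
  by move=> t _; rewrite lee_fin oneDsqrV_ge0.
have om : measurable_fun `]x%R, +oo[%classic (fun t => ((oneDsqr t)^-1)%:E).
  apply/measurable_EFinP; exact: mes_oneDsqrV.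
rewrite ge0_integralZl_EFin //; try (exact: o0); try (exact: om).
apply: (@le_trans _ _ ((2 * expR (- x ^+ 2 / 2))%:E *
   \int[mu]_(t in `[0%R, +oo[) ((oneDsqr t)^-1)%:E))%E.
  apply: lee_wpmul2l; first by rewrite lee_fin.
  apply: ge0_subset_integral => //.
  - apply/measurable_EFinP; exact: mes_oneDsqrV.
  - move=> t; rewrite /= !in_itv /= !andbT => xt.
    exact: le_trans x0 (ltW xt).
rewrite integral0y_oneDsqr -EFinM lee_fin.
rewrite (_ : 2 * expR (- x ^+ 2 / 2) * (pi / 2) = pi * expR (- x ^+ 2 / 2)) ?lexx //; by field.
Qed.


Lemma tail_eq (x : R) : 0 <= x ->
 (\int[mu]_(t in `[0%R, x]) (gauss_fun t)%:E + \int[mu]_(t in `]x%R, +oo[) (gauss_fun t)%:E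
   = (Num.sqrt pi / 2)%:E)%E.
Proof.
move=> x0; rewrite -integral0y_gauss.
rewrite (_ : `[0%R, +oo[%classic = `[0, x] `|` `]x, +oo[); last first.
  by apply: itv_bndbnd_setU; rewrite bnd_simp.
rewrite ge0_integral_setU //.
- apply/measurable_EFinP; apply: measurable_funTS; exact: measurable_gauss_fun.
- by move=> t _; rewrite lee_fin gauss_fun_ge0.
- apply: lt_disjoint => a b; rewrite !in_itv /= => /andP[_ ax] /andP[xb _].
  exact: le_lt_trans ax xb.
Qed.

Lemma Erf_bounds (x : R) : 0 <= x ->
  0 <= 1 - Erf x <= 2 * Num.sqrt pi * expR (- x ^+ 2 / 2).
Proof.
move=> x0.
have E := tail_eq x x0.
set I0 := (\int[mu]_(t in `[0%R, x]) (gauss_fun t)%:E)%E in E.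
set T := (\int[mu]_(t in `]x%R, +oo[) (gauss_fun t)%:E)%E in E.
have I00 : (0 <= I0)%E by apply: integral_ge0 => t _; rewrite lee_fin gauss_fun_ge0.
have T0 : (0 <= T)%E by apply: integral_ge0 => t _; rewrite lee_fin gauss_fun_ge0.
have I0f : I0 = (fine I0)%:E.
  rewrite fineK // ge0_fin_numE //; apply: (@le_lt_trans _ _ (I0 + T)%E).
    exact: leeDl.
  by rewrite E ltry.
have Tf : T = (fine T)%:E.
  rewrite fineK // ge0_fin_numE //; apply: (@le_lt_trans _ _ (I0 + T)%E).
    exact: leeDr.
  by rewrite E ltry.
have Tle := tail_le x x0; rewrite -/T Tf lee_fin in Tle.
have T0' : 0 <= fine T by rewrite -lee_fin -Tf.
have E2 : fine I0 + fine T = Num.sqrt pi / 2.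
  by apply: EFin_inj; rewrite EFinD -I0f -Tf.
have ErfE : Erf x = 2 / Num.sqrt pi * fine I0 by [].
have sp : 0 < Num.sqrt (pi : R) by rewrite sqrtr_gt0 pi_gt0.
have spi : Num.sqrt (pi : R) ^+ 2 = pi by rewrite sqr_sqrtr // pi_ge0.
have -> : 1 - Erf x = 2 / Num.sqrt pi * fine T.
  rewrite ErfE (_ : fine I0 = Num.sqrt pi / 2 - fine T); last by rewrite -E2; ring.
  field; by rewrite gt_eqF.
apply/andP; split.
  by rewrite mulr_ge0 // divr_ge0 // ltW.
rewrite -spi in Tle.
apply: (le_trans (ler_wpM2l _ Tle)).
  by rewrite divr_ge0 // ltW.
rewrite le_eqVlt; apply/orP; left; apply/eqP.
field; by rewrite gt_eqF.
Qed.

Lemma I0_fin (x : R) :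
  (\int[mu]_(t in `[0%R, x]) (gauss_fun t)%:E)%E \is a fin_num.
Proof.
rewrite ge0_fin_numE; last by apply: integral_ge0 => t _; rewrite lee_fin gauss_fun_ge0.
apply: (@le_lt_trans _ _ (\int[mu]_(t in `[0%R, +oo[) (gauss_fun t)%:E)%E).
  apply: ge0_subset_integral => //.
  - apply/measurable_EFinP; apply: measurable_funTS; exact: measurable_gauss_fun.
  - by move=> t _; rewrite lee_fin gauss_fun_ge0.
  - by move=> t; rewrite /= !in_itv /= => /andP[-> _].
by rewrite integral0y_gauss ltry.
Qed.

Lemma Erf_nd : {homo (@Erf R) : x y / x <= y}.
Proof.
move=> x y xy; rewrite /Erf /Rintegral.
apply: ler_wpM2l.
  by rewrite divr_ge0 // sqrtr_ge0.
apply: fine_le; [exact: I0_fin | exact: I0_fin |].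
apply: ge0_subset_integral => //.
- apply/measurable_EFinP; apply: measurable_funTS; exact: measurable_gauss_fun.
- move=> t; rewrite /= !in_itv /= => /andP[-> ty] /=.
  exact: le_trans ty xy.
Qed.

Lemma Erf_scale_measurable (eps : R) (D : set R) : 0 < eps -> measurable D ->
  measurable_fun D (fun r => Erf (r / eps)).
Proof.
move=> e0 mD; apply: nondecreasing_measurable => // x y xy.
apply: Erf_nd; by rewrite ler_pM2r // invr_gt0.
Qed.

Lemma key (C c M R0 r a : R) : 0 <= C -> 0 < c -> 0 < R0 -> R0 <= r ->
  M = C / (c * R0) -> M <= a -> C * r * expR (- (a * r ^+ 2)) <= c.
Proof.
move=> C0 c0 R00 R0r ME Ma.
have r0 : 0 < r by exact: lt_le_trans R00 R0r.
rewrite expRN ler_pdivrMr ?expR_gt0 //.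
have e1 := expR_ge1Dx (a * r ^+ 2).
have M0 : 0 <= M by rewrite ME divr_ge0 // mulr_ge0 // ltW.
have h1 : C * r <= c * (M * r ^+ 2).
  rewrite ME.
  have -> : c * (C / (c * R0) * r ^+ 2) = C * r * (r / R0).
    by field; rewrite ?gt_eqF // ?mulr_gt0.
  rewrite ler_peMr //; first by rewrite mulr_ge0 // ltW.
  by rewrite ler_pdivlMr // mul1r.
apply: (le_trans h1); apply: ler_wpM2l; first exact: ltW.
apply: le_trans e1.
have : M * r ^+ 2 <= a * r ^+ 2 by rewrite ler_wpM2r // sqr_ge0.
lra.
Qed.
End S.

Theorem theorem4p1 (R : realType) (d : nat) (R0 : R) (U : R -> R)
  (hd : (2 <= d)%N) (hR0 : 0 < R0)
  (hU : measurable_fun (`]0, +oo[ : set R) U)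
  (hint : exists delta : R, 0 < delta /\
     (\int[@lebesgue_measure R]_(r in `[R0, +oo[)
         (`|U r| * r ^+ (d - 2) * expR (- r ^+ 2 / delta ^+ 2))%:E < +oo)%E) :
  forall tol : R, 0 < tol ->
  exists eps0 : R, 0 < eps0 /\
    forall eps : R, 0 < eps -> eps < eps0 ->
      (\int[@lebesgue_measure R]_(r in `[R0, +oo[)
          (`|(U r - Ueps eps U r)| * r ^+ (d - 1))%:E <= tol%:E)%E.
Proof.
move=> tol tol0.
case: hint => delta [dl0 hJ].
pose h := fun r => `|U r| * r ^+ (d - 2) * expR (- r ^+ 2 / delta ^+ 2).
pose J := (\int[@lebesgue_measure R]_(r in `[R0, +oo[) (h r)%:E)%E.
have hJ' : (J < +oo)%E := hJ.
have mD : measurable (`[R0, +oo[ : set R) by [].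
have hUR : measurable_fun `[R0, +oo[ U.
  apply: (measurable_funS _ _ hU) => //.
  by move=> t; rewrite /= !in_itv /= !andbT => /(lt_le_trans hR0).
have h0 : forall r, `[R0, +oo[%classic r -> 0 <= h r.
  move=> r; rewrite /= in_itv /= andbT => Rr.
  have r0 : 0 <= r by apply: le_trans Rr; exact: ltW.
  by rewrite /h !mulr_ge0 ?expR_ge0 ?exprn_ge0.
have mh : measurable_fun `[R0, +oo[ h.
  apply: measurable_funM; first apply: measurable_funM.
  - by apply: measurableT_comp => //; exact: normr_measurable.
  - exact: exprn_measurable.
  - apply: measurableT_comp; first exact: measurable_expR.
    apply: measurable_funM => //.
    apply: measurableT_comp => //; exact: exprn_measurable.
have J0 : (0 <= J)%E by apply: integral_ge0 => r /h0; rewrite lee_fin.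
have Jf : J = (fine J)%:E by rewrite fineK // ge0_fin_numE.
have J0' : 0 <= fine J by rewrite -lee_fin -Jf.
pose C : R := 2 * Num.sqrt pi.
have C0 : 0 <= C by rewrite mulr_ge0 // sqrtr_ge0.
pose c : R := tol / (fine J + 1).
have c0 : 0 < c by rewrite divr_gt0 //; lra.
pose M : R := C / (c * R0).
have M0 : 0 <= M by rewrite divr_ge0 // mulr_ge0 // ltW.
pose K : R := 2 * (delta ^+ 2)^-1 + 2 * M.
have K0 : 0 < K.
  have : 0 < (delta ^+ 2)^-1 by rewrite invr_gt0 exprn_gt0.
  rewrite /K; lra.
exists (K + 1)^-1; split; first by rewrite invr_gt0; lra.
move=> eps eps0 epsK.
have epsa : M <= (2 * eps ^+ 2)^-1 - (delta ^+ 2)^-1.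
  have e1 : eps < 1.
    apply: lt_le_trans epsK _; rewrite invf_le1; lra.
  have e2 : eps ^+ 2 < (K + 1)^-1.
    apply: le_lt_trans epsK; rewrite expr2 ler_piMr //; exact: ltW.
  have e3 : eps ^+ 2 * K < 1.
    rewrite -ltr_pdivlMr // (lt_le_trans e2) //.
    by rewrite div1r lef_pV2 ?posrE; lra.
  have e4 : 0 < eps ^+ 2 by rewrite exprn_gt0.
  have dd : 0 < delta ^+ 2 by rewrite exprn_gt0.
  have -> : (2 * eps ^+ 2)^-1 - (delta ^+ 2)^-1 = M + (1 - eps ^+ 2 * K) / (2 * eps ^+ 2).
    by rewrite /K; field; rewrite ?gt_eqF.
  rewrite lerDl divr_ge0 //; first lra.
  by rewrite mulr_ge0 // ltW.
pose a : R := (2 * eps ^+ 2)^-1 - (delta ^+ 2)^-1.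
have pt : forall r, `[R0, +oo[%classic r ->
    `|U r - Ueps eps U r| * r ^+ (d - 1) <= c * h r.
  move=> r; rewrite /= in_itv /= andbT => Rr.
  have r0 : 0 < r by apply: lt_le_trans Rr.
  have x0 : 0 <= r / eps by rewrite divr_ge0 // ltW.
  have /andP[b0 b1] := Erf_bounds (r / eps) x0.
  have key1 : (1 - Erf (r / eps)) * r <= c * expR (- r ^+ 2 / delta ^+ 2).
    apply: le_trans (ler_wpM2r (ltW r0) b1) _.
    have eE : expR (- (r / eps) ^+ 2 / 2) =
        expR (- r ^+ 2 / delta ^+ 2) * expR (- (a * r ^+ 2)).
      rewrite -expRD; congr expR; rewrite /a; field.
      by rewrite ?gt_eqF // ?exprn_gt0.
    rewrite eE.
    have kk := @key R C c M R0 r a C0 c0 hR0 Rr (erefl M) epsa.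
    have -> : 2 * Num.sqrt pi * (expR (- r ^+ 2 / delta ^+ 2) * expR (- (a * r ^+ 2))) * r
       = (C * r * expR (- (a * r ^+ 2))) * expR (- r ^+ 2 / delta ^+ 2).
      by rewrite /C; ring.
    by apply: ler_wpM2r => //; exact: expR_ge0.
  have -> : U r - Ueps eps U r = U r * (1 - Erf (r / eps)) by rewrite /Ueps; ring.
  have -> : (d - 1 = (d - 2).+1)%N by rewrite subnSK.
  rewrite normrM (ger0_norm b0) exprS /h.
  have -> : `|U r| * (1 - Erf (r / eps)) * (r * r ^+ (d - 2))
     = (`|U r| * r ^+ (d - 2)) * ((1 - Erf (r / eps)) * r) by ring.
  have -> : c * (`|U r| * r ^+ (d - 2) * expR (- r ^+ 2 / delta ^+ 2))
     = (`|U r| * r ^+ (d - 2)) * (c * expR (- r ^+ 2 / delta ^+ 2)) by ring.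
  apply: ler_wpM2l => //.
  by rewrite mulr_ge0 // exprn_ge0 // ltW.
have mE : measurable_fun `[R0, +oo[ (fun r => Erf (r / eps)).
  exact: Erf_scale_measurable.
apply: (@le_trans _ _ (\int[@lebesgue_measure R]_(r in `[R0, +oo[) (c%:E * (h r)%:E))%E).
  apply: ge0_le_integral => //.
  - move=> r /= Rr; rewrite lee_fin mulr_ge0 //.
    rewrite exprn_ge0 //; move: Rr; rewrite /= in_itv /= andbT => Rr.
    by apply: le_trans Rr; exact: ltW.
  - apply/measurable_EFinP; apply: measurable_funM; last exact: exprn_measurable.
    apply: measurableT_comp; first exact: normr_measurable.
    apply: measurable_funB => //.
    exact: measurable_funM.
  - apply: emeasurable_funM => //; exact/measurable_EFinP.
have hE0 : forall r, `[R0, +oo[%classic r -> (0 <= (h r)%:E)%E.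
  by move=> r /h0; rewrite lee_fin.
have hEm : measurable_fun `[R0, +oo[ (fun r => (h r)%:E) by exact/measurable_EFinP.
rewrite ge0_integralZl_EFin //; try (exact: hE0); try (exact: hEm); try (exact: ltW).
rewrite -/J Jf -EFinM lee_fin /c.
rewrite mulrAC ler_pdivrMr; last lra.
nra.
Qed.
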